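(* Let $p,q$ be natural numbers and let $T=T_v$ with $v=\{(p_n,\ell_n,q_n,m_n):n\in\mathbb N\}\in\mathcal W$. If the set $$\Big\{n\in\mathbb N:\ \frac{q_n}{q}=\frac{p_n}{p}\in\mathbb N\Big\}$$ is infinite, then $T^p\times T^q$ and $T^{-p}\times T^q$ are conservative.
   Context: Rank-one construction (cutting and stacking): let $a_n,b_n,c_n,d_n$ ($n\ge 0$) be sequences of positive integers. Let $G_0$ be the unit interval $[0,1)$, a column of height $H_0=1$ (set $h_0=1$). Given the column $G_n$ of height $H_n$, form $G_{n+1}$ by cutting $G_n$ into four subcolumns of equal width, placing $a_n,b_n,c_n,d_n$ spacers on top of the first, second, third and fourth subcolumns respectively, and stacking the subcolumns from left to right. This defines a Lebesgue-measure-preserving invertible transformation $T$ on a subset of $\mathbb R$ with Lebesgue measure $\mu$. Put $p_n=H_n+a_n$, $\ell_n=H_n+b_n$, $q_n=H_n+c_n$, $m_n=H_n+d_n$ and $h_{n+1}=p_n+\ell_n+q_n+H_n$. Write $T=T_v$ with $v=\{(p_n,\ell_n,q_n,m_n)\}$. $\mathcal W$ is the set of such $v$ with $\lim p_n/h_n=\infty$, $\ell_n>n(p_n+q_n+2h_n)$ and $m_n>n\,h_{n+1}$ for all $n$. A measure-preserving $S$ is conservative if for every set $A$ of positive measure there is $n\ge1$ with $\mu(S^{-n}A\cap A)>0$. *)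

(* Defs.v *)
From Stdlib Require Import Reals Lra Lia Arith List ClassicalEpsilon.
Import ListNotations.
Open Scope R_scope.

(* Spacer sequences a b c d : nat -> nat (positivity is a hypothesis). *)

(* Width of the levels of column G_n : 4^{-n}. *)
Definition width (n : nat) : R := (/ 4) ^ n.

Definition spacers (s w : R) (count : nat) : list R :=
  map (fun j => s + INR j * w) (seq 0 count).

(* col a b c d n = (left endpoints of the levels of G_n, bottom to top,
   right end of the region of R used so far).  Level i of G_n is
   [L_i, L_i + width n).  G_0 = [0,1); new spacers are taken as fresh
   intervals to the right of everything used so far. *)
Fixpoint col (a b c d : nat -> nat) (n : nat) : list R * R :=
  match n with
  | O => ([0], 1)
  | S k =>
      let (ls, r) := col a b c d k in
      let w := width (S k) in
      let sub (j : nat) := map (fun x => x + INR j * w) ls in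
      (sub 0%nat ++ spacers r w (a k)
       ++ sub 1%nat ++ spacers (r + INR (a k) * w) w (b k)
       ++ sub 2%nat ++ spacers (r + INR (a k + b k) * w) w (c k)
       ++ sub 3%nat ++ spacers (r + INR (a k + b k + c k) * w) w (d k),
       r + INR (a k + b k + c k + d k) * w)
  end.

Definition levels a b c d n : list R := fst (col a b c d n).

Definition in_level a b c d (n i : nat) (x : R) : Prop :=
  (i < length (levels a b c d n))%nat /\
  nth i (levels a b c d n) 0 <= x < nth i (levels a b c d n) 0 + width n.

Definition Xspace a b c d (x : R) : Prop := exists n i, in_level a b c d n i x.

Definition Tgraph a b c d (x y : R) : Prop :=
  exists n i, (S i < length (levels a b c d n))%nat /\ in_level a b c d n i x /\
    y = x - nth i (levels a b c d n) 0 + nth (S i) (levels a b c d n) 0.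

(* T (defined off the graph, a null set, as the identity) and its inverse. *)
Definition Tmap a b c d (x : R) : R :=
  epsilon (inhabits 0) (fun y => Tgraph a b c d x y \/
                                 (~ (exists z, Tgraph a b c d x z) /\ y = x)).
Definition Tinv a b c d (y : R) : R :=
  epsilon (inhabits 0) (fun x => Tgraph a b c d x y \/
                                 (~ (exists z, Tgraph a b c d z y) /\ x = y)).

Fixpoint Hc (a b c d : nat -> nat) (n : nat) : nat :=
  match n with
  | O => 1%nat
  | S k => (4 * Hc a b c d k + a k + b k + c k + d k)%nat
  end.
Definition pp a b c d n : nat := (Hc a b c d n + a n)%nat.
Definition ll a b c d n : nat := (Hc a b c d n + b n)%nat.
Definition qq a b c d n : nat := (Hc a b c d n + c n)%nat.
Definition mm a b c d n : nat := (Hc a b c d n + d n)%nat.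
Definition hh a b c d (n : nat) : nat :=
  match n with
  | O => 1%nat
  | S k => (pp a b c d k + ll a b c d k + qq a b c d k + Hc a b c d k)%nat
  end.

Definition in_W (a b c d : nat -> nat) : Prop :=
  cv_infty (fun n => INR (pp a b c d n) / INR (hh a b c d n)) /\
  (forall n, (ll a b c d n > n * (pp a b c d n + qq a b c d n + 2 * hh a b c d n))%nat) /\
  (forall n, (mm a b c d n > n * hh a b c d (S n))%nat).

Definition set2 := R * R -> Prop.

Fixpoint psum (f : nat -> R) (N : nat) : R :=
  match N with O => 0 | S k => psum f k + f k end.

(* lambda^*(B) < eps : B is covered by countably many half-open rectangles
   [a_k,b_k) x [c_k,d_k) of total area <= eps' < eps. *)
Definition outer_lt (B : set2) (eps : R) : Prop :=
  exists (ra rb rc rd : nat -> R) (eps' : R),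
    eps' < eps /\
    (forall k, ra k <= rb k /\ rc k <= rd k) /\
    (forall z, B z -> exists k, ra k <= fst z < rb k /\ rc k <= snd z < rd k) /\
    (forall N, psum (fun k => (rb k - ra k) * (rd k - rc k)) N <= eps').

Definition null2 (B : set2) : Prop := forall eps, 0 < eps -> outer_lt B eps.

Definition open2 (U : set2) : Prop :=
  forall z, U z -> exists r, 0 < r /\
    forall z', Rabs (fst z' - fst z) < r -> Rabs (snd z' - snd z) < r -> U z'.

(* Lebesgue measurability: outer regularity by open sets. *)
Definition measurable2 (A : set2) : Prop :=
  forall eps, 0 < eps -> exists U, open2 U /\ (forall z, A z -> U z) /\
    outer_lt (fun z => U z /\ ~ A z) eps.

(* Conservativity of S on (X x X, mu x mu), mu = Lebesgue restricted to X. *)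
Definition conservative2 (X : R -> Prop) (S : R * R -> R * R) : Prop :=
  forall A : set2, (forall z, A z -> X (fst z) /\ X (snd z)) ->
    measurable2 A -> ~ null2 A ->
    exists n : nat, (1 <= n)%nat /\
      ~ null2 (fun z => A (Nat.iter n S z) /\ A z).

Definition prodmap (f g : R -> R) (z : R * R) : R * R := (f (fst z), g (snd z)).

(* Main.v *)
Require Import Defs.
From Stdlib Require Import Reals Lra Lia Arith List ClassicalEpsilon Classical Cantor.
Open Scope R_scope.

Fixpoint lev (a b c d : nat -> nat) (n : nat) : list nat :=
  match n with
  | O => (0%nat :: nil)
  | S k => let H := Hc a b c d k in let l := lev a b c d k in
     (map (fun m => 4*m)%nat l ++ seq (4*H) (a k)
      ++ map (fun m => 4*m+1)%nat l ++ seq (4*H + a k) (b k)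
      ++ map (fun m => 4*m+2)%nat l ++ seq (4*H + a k + b k) (c k)
      ++ map (fun m => 4*m+3)%nat l ++ seq (4*H + a k + b k + c k) (d k))%list
  end.

Lemma width_S n : width n = 4 * width (S n).
Proof. unfold width. simpl. field. Qed.

Lemma width_pos n : 0 < width n.
Proof. unfold width. apply pow_lt. lra. Qed.

Lemma seq_add_shift s cnt : seq s cnt = map (fun j => (s + j)%nat) (seq 0 cnt).
Proof.
  revert s. induction cnt as [|cnt IH]; intro s; [reflexivity|].
  simpl. f_equal; [lia|]. rewrite IH. rewrite <- seq_shift. rewrite map_map.
  apply map_ext. intro; lia.
Qed.

Lemma spacers_eq (s : nat) w cnt :
  spacers (INR s * w) w cnt = map (fun m => INR m * w) (seq s cnt).
Proof.
  unfold spacers. rewrite (seq_add_shift s). rewrite map_map. apply map_ext.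
  intro j. rewrite plus_INR. ring.
Qed.

Lemma sub_eq (l : list nat) k (j : nat) :
  map (fun x => x + INR j * width (S k)) (map (fun m => INR m * width k) l)
  = map (fun m => INR m * width (S k)) (map (fun m => 4*m+j)%nat l).
Proof.
  rewrite !map_map. apply map_ext. intro m. rewrite (width_S k).
  rewrite plus_INR, mult_INR. simpl INR. ring.
Qed.

Lemma sub_eq0 (l : list nat) k :
  map (fun x => x + INR 0 * width (S k)) (map (fun m => INR m * width k) l)
  = map (fun m => INR m * width (S k)) (map (fun m => 4*m)%nat l).
Proof.
  rewrite !map_map. apply map_ext. intro m. rewrite (width_S k).
  rewrite mult_INR. simpl INR. ring.
Qed.

Lemma col_lev a b c d n :
  fst (col a b c d n) = map (fun m => INR m * width n) (lev a b c d n) /\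
  snd (col a b c d n) = INR (Hc a b c d n) * width n.
Proof.
  induction n as [|k [IH1 IH2]].
  - simpl. unfold width. simpl. split; [f_equal; ring | ring].
  - cbn [col]. destruct (col a b c d k) as [ls r]. cbn [fst snd] in IH1, IH2 |- *. subst ls r.
    cbn [lev Hc]. set (H := Hc a b c d k).
    assert (Hr : INR H * width k = INR (4*H) * width (S k)).
    { rewrite (width_S k), mult_INR. simpl INR. ring. }
    rewrite Hr.
    assert (E1 : INR (4*H) * width (S k) + INR (a k) * width (S k) = INR (4*H + a k) * width (S k))
      by (rewrite plus_INR; ring).
    assert (E2 : INR (4*H) * width (S k) + INR (a k + b k) * width (S k) = INR (4*H + a k + b k) * width (S k))
      by (rewrite !plus_INR; ring).
    assert (E3 : INR (4*H) * width (S k) + INR (a k + b k + c k) * width (S k) = INR (4*H + a k + b k + c k) * width (S k))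
      by (rewrite !plus_INR; ring).
    rewrite E1, E2, E3.
    split.
    + rewrite !map_app, !spacers_eq, sub_eq0, !sub_eq. reflexivity.
    + rewrite !plus_INR, mult_INR. simpl INR. ring.
Qed.

Lemma lev_len a b c d n : length (lev a b c d n) = Hc a b c d n.
Proof.
  induction n as [|k IH]; [reflexivity|].
  cbn [lev Hc]. rewrite !length_app, !length_map, !length_seq, IH. lia.
Qed.

Lemma NoDup_map_lin (l : list nat) j : NoDup l -> NoDup (map (fun m => 4*m+j)%nat l).
Proof.
  induction 1 as [|x l Hx Hl IH]; simpl; constructor; auto.
  rewrite in_map_iff. intros [y [Hy Hy']]. apply Hx. replace x with y by lia. exact Hy'.
Qed.

Lemma NoDup_map_4 (l : list nat) : NoDup l -> NoDup (map (fun m => 4*m)%nat l).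
Proof.
  induction 1 as [|x l Hx Hl IH]; simpl; constructor; auto.
  rewrite in_map_iff. intros [y [Hy Hy']]. apply Hx. replace x with y by lia. exact Hy'.
Qed.

Ltac memb_tac :=
  repeat match goal with
  | H : In _ (_ ++ _) |- _ => apply in_app_or in H; destruct H as [H|H]
  | H : In _ (map _ _) |- _ => apply in_map_iff in H; destruct H as [? [? H]]
  | H : In _ (seq _ _) |- _ => apply in_seq in H
  end.

Lemma lev_props a b c d n :
  NoDup (lev a b c d n) /\ (forall m, In m (lev a b c d n) -> (m < Hc a b c d n)%nat).
Proof.
  induction n as [|k [IHn IHb]].
  - simpl. split; [constructor; [simpl; tauto| constructor] |].
    intros m [H|[]]; lia.
  - cbn [lev Hc]. set (H := Hc a b c d k) in *. split.
    + repeat (apply NoDup_app;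
        [ first [apply NoDup_map_4; assumption | apply NoDup_map_lin; assumption | apply seq_NoDup] | |
          let m := fresh "m" in let H1 := fresh "H1" in let H2 := fresh "H2" in
          intros m H1 H2; memb_tac; subst;
          repeat match goal with Hh : In ?x (lev a b c d k) |- _ => apply IHb in Hh end; lia ]).
      all: first [apply NoDup_map_lin; assumption | apply seq_NoDup].
    + intros m Hm. memb_tac; subst;
          repeat match goal with Hh : In ?x (lev a b c d k) |- _ => apply IHb in Hh end; lia.
Qed.

Lemma lev_all a b c d n m : (m < Hc a b c d n)%nat -> In m (lev a b c d n).
Proof.
  intro Hm. destruct (lev_props a b c d n) as [Hnd Hb].
  assert (Hi : incl (seq 0 (Hc a b c d n)) (lev a b c d n)).
  { apply NoDup_length_incl.
    - exact Hnd.
    - rewrite length_seq, lev_len. lia.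
    - intros x Hx. apply in_seq. split; [lia|]. apply Hb in Hx. lia. }
  apply Hi. apply in_seq. lia.
Qed.

Definition off a b c d (k s : nat) : nat :=
  let H := Hc a b c d k in
  match s with
  | O => O
  | 1 => (H + a k)%nat
  | 2 => (2*H + a k + b k)%nat
  | _ => (3*H + a k + b k + c k)%nat
  end.

Lemma nth_map_lt (f : nat -> nat) l i : (i < length l)%nat -> nth i (map f l) 0%nat = f (nth i l 0%nat).
Proof. intro. rewrite nth_indep with (d' := f 0%nat) by (rewrite length_map; lia). apply map_nth. Qed.

Lemma lev_nth_off a b c d k s i : (s < 4)%nat -> (i < Hc a b c d k)%nat ->
  nth (off a b c d k s + i) (lev a b c d (S k)) 0%nat = (4 * nth i (lev a b c d k) 0%nat + s)%nat.
Proof.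
  intros Hs Hi. pose proof (lev_len a b c d k) as HL.
  unfold off. cbn [lev]. set (H := Hc a b c d k) in *. set (l := lev a b c d k) in *.
  destruct s as [|[|[|[|s]]]]; [ | | | | lia].
  - simpl Nat.add at 1. rewrite app_nth1 by (rewrite length_map; lia).
    rewrite nth_map_lt by lia. lia.
  - replace (H + a k + i)%nat with (length (map (fun m => 4*m)%nat l) + (length (seq (4*H) (a k)) + i))%nat
      by (rewrite length_map, length_seq; lia).
    rewrite app_nth2_plus, app_nth2_plus, app_nth1 by (rewrite length_map; lia).
    rewrite nth_map_lt by lia. reflexivity.
  - replace (2*H + a k + b k + i)%nat with
      (length (map (fun m => 4*m)%nat l) + (length (seq (4*H) (a k)) +
      (length (map (fun m => 4*m+1)%nat l) + (length (seq (4*H + a k) (b k)) + i))))%nat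
      by (rewrite !length_map, !length_seq; lia).
    rewrite !app_nth2_plus, app_nth1 by (rewrite length_map; lia).
    rewrite nth_map_lt by lia. reflexivity.
  - replace (3*H + a k + b k + c k + i)%nat with
      (length (map (fun m => 4*m)%nat l) + (length (seq (4*H) (a k)) +
      (length (map (fun m => 4*m+1)%nat l) + (length (seq (4*H + a k) (b k)) +
      (length (map (fun m => 4*m+2)%nat l) + (length (seq (4*H + a k + b k) (c k)) + i))))))%nat
      by (rewrite !length_map, !length_seq; lia).
    rewrite !app_nth2_plus, app_nth1 by (rewrite length_map; lia).
    rewrite nth_map_lt by lia. reflexivity.
Qed.

Lemma off_bound a b c d k s i : (s < 4)%nat -> (i < Hc a b c d k)%nat ->
  (off a b c d k s + i < Hc a b c d (S k))%nat.
Proof.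
  intros Hs Hi. unfold off. cbn [Hc].
  destruct s as [|[|[|[|s]]]]; lia.
Qed.

Definition Lv a b c d n i := nth i (levels a b c d n) 0.

Lemma levels_eq a b c d n : levels a b c d n = map (fun m => INR m * width n) (lev a b c d n).
Proof. unfold levels. apply (col_lev a b c d n). Qed.

Lemma levels_len a b c d n : length (levels a b c d n) = Hc a b c d n.
Proof. rewrite levels_eq, length_map. apply lev_len. Qed.

Lemma Lv_eq a b c d n i : (i < Hc a b c d n)%nat ->
  Lv a b c d n i = INR (nth i (lev a b c d n) 0%nat) * width n.
Proof.
  intro Hi. unfold Lv. rewrite levels_eq.
  rewrite nth_indep with (d' := INR 0 * width n) by (rewrite length_map, lev_len; lia).
  apply (map_nth (fun m => INR m * width n)).
Qed.

Lemma in_level_iff a b c d n i x :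
  in_level a b c d n i x <-> ((i < Hc a b c d n)%nat /\
     Lv a b c d n i <= x < Lv a b c d n i + width n).
Proof.
  unfold in_level. rewrite levels_len. fold (Lv a b c d n i). tauto.
Qed.

Lemma nat_cell_unique (u v : nat) w x : 0 < w ->
  INR u * w <= x < INR u * w + w -> INR v * w <= x < INR v * w + w -> u = v.
Proof.
  intros Hw Hu Hv.
  destruct (lt_eq_lt_dec u v) as [[H|H]|H]; auto.
  - assert (INR (S u) <= INR v) by (apply le_INR; lia). rewrite S_INR in H0.
    assert ((INR u + 1) * w <= INR v * w) by (apply Rmult_le_compat_r; lra). lra.
  - assert (INR (S v) <= INR u) by (apply le_INR; lia). rewrite S_INR in H0.
    assert ((INR v + 1) * w <= INR u * w) by (apply Rmult_le_compat_r; lra). lra.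
Qed.

Lemma level_unique a b c d n i j x :
  in_level a b c d n i x -> in_level a b c d n j x -> i = j.
Proof.
  rewrite !in_level_iff. intros [Hi Hx] [Hj Hy].
  rewrite Lv_eq in Hx, Hy by assumption.
  pose proof (nat_cell_unique _ _ _ _ (width_pos n) Hx Hy) as E.
  destruct (lev_props a b c d n) as [Hnd _].
  apply (proj1 (NoDup_nth (lev a b c d n) 0%nat) Hnd); try rewrite lev_len; assumption.
Qed.

Lemma Lv_S_off a b c d k s i : (s < 4)%nat -> (i < Hc a b c d k)%nat ->
  Lv a b c d (S k) (off a b c d k s + i) = Lv a b c d k i * 4 * width (S k) / width k + INR s * width (S k).
Proof.
  intros Hs Hi. rewrite Lv_eq by (apply off_bound; assumption).
  rewrite lev_nth_off by assumption. rewrite Lv_eq by assumption.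
  rewrite plus_INR, mult_INR. simpl INR. field. pose proof (width_pos k). lra.
Qed.

Lemma Lv_off a b c d k s i : (s < 4)%nat -> (i < Hc a b c d k)%nat ->
  Lv a b c d (S k) (off a b c d k s + i) = Lv a b c d k i + INR s * width (S k).
Proof.
  intros Hs Hi. rewrite Lv_S_off by assumption. rewrite (width_S k).
  field. pose proof (width_pos (S k)). lra.
Qed.

Lemma descent a b c d k i x : in_level a b c d k i x ->
  exists s, (s < 4)%nat /\ in_level a b c d (S k) (off a b c d k s + i) x.
Proof.
  rewrite in_level_iff. intros [Hi Hx]. pose proof (width_S k) as Ew.
  pose proof (width_pos (S k)) as Hw.
  assert (G : forall s, (s < 4)%nat -> Lv a b c d k i + INR s * width (S k) <= x <
               Lv a b c d k i + INR s * width (S k) + width (S k) ->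
               exists s, (s < 4)%nat /\ in_level a b c d (S k) (off a b c d k s + i) x).
  { intros s Hs Hxs. exists s. split; auto. rewrite in_level_iff.
    split; [apply off_bound; auto|]. rewrite Lv_off by auto. exact Hxs. }
  destruct (Rlt_le_dec x (Lv a b c d k i + 1 * width (S k))).
  { apply (G 0%nat); [lia|]. simpl INR. lra. }
  destruct (Rlt_le_dec x (Lv a b c d k i + 2 * width (S k))).
  { apply (G 1%nat); [lia|]. simpl INR. lra. }
  destruct (Rlt_le_dec x (Lv a b c d k i + 3 * width (S k))).
  { apply (G 2%nat); [lia|]. simpl INR. lra. }
  apply (G 3%nat); [lia|]. simpl INR. lra.
Qed.

Lemma consist1 a b c d k i j t x :
  in_level a b c d k i x -> in_level a b c d (S k) j x -> (i + t < Hc a b c d k)%nat ->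
  (j + t < Hc a b c d (S k))%nat /\
  Lv a b c d (S k) (j + t) - Lv a b c d (S k) j = Lv a b c d k (i + t) - Lv a b c d k i.
Proof.
  intros Hx Hy Ht. destruct (descent _ _ _ _ _ _ _ Hx) as [s [Hs Hz]].
  pose proof (level_unique _ _ _ _ _ _ _ _ Hy Hz) as E. subst j.
  assert (Hi : (i < Hc a b c d k)%nat) by lia.
  split.
  - rewrite <- Nat.add_assoc. apply off_bound; auto.
  - rewrite <- Nat.add_assoc. rewrite !Lv_off by auto. ring.
Qed.

Lemma consist a b c d dd : forall n i j t x,
  in_level a b c d n i x -> in_level a b c d (n + dd) j x -> (i + t < Hc a b c d n)%nat ->
  (j + t < Hc a b c d (n + dd))%nat /\
  Lv a b c d (n + dd) (j + t) - Lv a b c d (n + dd) j = Lv a b c d n (i + t) - Lv a b c d n i.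
Proof.
  induction dd as [|dd IH]; intros n i j t x Hx Hy Ht.
  - rewrite Nat.add_0_r in *. pose proof (level_unique _ _ _ _ _ _ _ _ Hx Hy). subst. auto.
  - destruct (descent _ _ _ _ _ _ _ Hx) as [s [Hs Hz]].
    replace (n + S dd)%nat with (S n + dd)%nat in * by lia.
    assert (Hi : (i < Hc a b c d n)%nat) by lia.
    destruct (IH (S n) (off a b c d n s + i)%nat j t x Hz Hy) as [H1 H2].
    { rewrite <- Nat.add_assoc. apply off_bound; auto. }
    split; auto. rewrite H2.
    destruct (consist1 _ _ _ _ _ _ _ t _ Hx Hz Ht) as [_ H3]. exact H3.
Qed.

Lemma descent_multi a b c d dd : forall n i x, in_level a b c d n i x ->
  exists j, in_level a b c d (n + dd) j x.
Proof.
  induction dd as [|dd IH]; intros n i x Hx.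
  - exists i. rewrite Nat.add_0_r. exact Hx.
  - destruct (descent _ _ _ _ _ _ _ Hx) as [s [_ Hz]].
    destruct (IH _ _ _ Hz) as [j Hj]. exists j.
    replace (n + S dd)%nat with (S n + dd)%nat by lia. exact Hj.
Qed.

Lemma level_shift a b c d n i j x : in_level a b c d n i x -> (j < Hc a b c d n)%nat ->
  in_level a b c d n j (x - Lv a b c d n i + Lv a b c d n j).
Proof. rewrite !in_level_iff. intros [Hi Hx] Hj. split; auto. lra. Qed.

Lemma Tgraph_unfold a b c d x y : Tgraph a b c d x y <->
  exists n i, (S i < Hc a b c d n)%nat /\ in_level a b c d n i x /\
    y = x - Lv a b c d n i + Lv a b c d n (S i).
Proof.
  unfold Tgraph, Lv. split; intros [n [i [H1 [H2 H3]]]]; exists n, i;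
    rewrite levels_len in *; auto.
Qed.

Lemma Tgraph_fun_aux a b c d x n1 i1 n2 i2 :
  (n1 <= n2)%nat -> (S i1 < Hc a b c d n1)%nat -> in_level a b c d n1 i1 x ->
  (S i2 < Hc a b c d n2)%nat -> in_level a b c d n2 i2 x ->
  x - Lv a b c d n1 i1 + Lv a b c d n1 (S i1) = x - Lv a b c d n2 i2 + Lv a b c d n2 (S i2).
Proof.
  intros Hle H1 Hx1 H2 Hx2.
  replace n2 with (n1 + (n2 - n1))%nat in * by lia.
  destruct (consist a b c d (n2 - n1) n1 i1 i2 1 x Hx1 Hx2) as [_ E].
  { lia. }
  rewrite !Nat.add_1_r in E. lra.
Qed.

Lemma Tgraph_fun a b c d x y1 y2 : Tgraph a b c d x y1 -> Tgraph a b c d x y2 -> y1 = y2.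
Proof.
  rewrite !Tgraph_unfold. intros [n1 [i1 [H1 [Hx1 E1]]]] [n2 [i2 [H2 [Hx2 E2]]]]. subst.
  destruct (le_ge_dec n1 n2).
  - apply Tgraph_fun_aux; auto.
  - symmetry. apply Tgraph_fun_aux; auto.
Qed.

Lemma Tgraph_inj_aux a b c d x1 x2 n1 i1 n2 i2 :
  (n1 <= n2)%nat -> (S i1 < Hc a b c d n1)%nat -> in_level a b c d n1 i1 x1 ->
  (S i2 < Hc a b c d n2)%nat -> in_level a b c d n2 i2 x2 ->
  x1 - Lv a b c d n1 i1 + Lv a b c d n1 (S i1) = x2 - Lv a b c d n2 i2 + Lv a b c d n2 (S i2) ->
  x1 = x2.
Proof.
  intros Hle H1 Hx1 H2 Hx2 E.
  replace n2 with (n1 + (n2 - n1))%nat in * by lia.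
  destruct (descent_multi a b c d (n2 - n1) n1 i1 x1 Hx1) as [j Hj].
  destruct (consist a b c d (n2 - n1) n1 i1 j 1 x1 Hx1 Hj) as [Hb E'].
  { lia. }
  replace (i1 + 1)%nat with (S i1) in E' by lia. replace (j + 1)%nat with (S j) in E', Hb by lia.
  set (m := (n1 + (n2 - n1))%nat) in *.
  assert (Hy1 : in_level a b c d m (S j) (x1 - Lv a b c d m j + Lv a b c d m (S j)))
    by (apply level_shift; auto).
  assert (Hy2 : in_level a b c d m (S i2) (x2 - Lv a b c d m i2 + Lv a b c d m (S i2)))
    by (apply level_shift; auto).
  assert (Ey : x1 - Lv a b c d m j + Lv a b c d m (S j) = x2 - Lv a b c d m i2 + Lv a b c d m (S i2)) by lra.
  rewrite Ey in Hy1.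
  pose proof (level_unique _ _ _ _ _ _ _ _ Hy1 Hy2) as Ej. injection Ej as Ej. subst j.
  lra.
Qed.

Lemma Tgraph_inj a b c d x1 x2 y : Tgraph a b c d x1 y -> Tgraph a b c d x2 y -> x1 = x2.
Proof.
  rewrite !Tgraph_unfold. intros [n1 [i1 [H1 [Hx1 E1]]]] [n2 [i2 [H2 [Hx2 E2]]]].
  destruct (le_ge_dec n1 n2).
  - apply (Tgraph_inj_aux a b c d x1 x2 n1 i1 n2 i2); auto. congruence.
  - symmetry. apply (Tgraph_inj_aux a b c d x2 x1 n2 i2 n1 i1); auto. congruence.
Qed.

Lemma Tmap_spec a b c d x y : Tgraph a b c d x y -> Tmap a b c d x = y.
Proof.
  intro H. unfold Tmap.
  destruct (epsilon_spec (inhabits 0) (fun y => Tgraph a b c d x y \/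
     (~ (exists z, Tgraph a b c d x z) /\ y = x))) as [H1|[H1 _]].
  - exists y. left. exact H.
  - eapply Tgraph_fun; eauto.
  - exfalso. apply H1. exists y. exact H.
Qed.

Lemma Tinv_spec a b c d x y : Tgraph a b c d x y -> Tinv a b c d y = x.
Proof.
  intro H. unfold Tinv.
  destruct (epsilon_spec (inhabits 0) (fun x => Tgraph a b c d x y \/
     (~ (exists z, Tgraph a b c d z y) /\ x = y))) as [H1|[H1 _]].
  - exists x. left. exact H.
  - eapply Tgraph_inj; eauto.
  - exfalso. apply H1. exists x. exact H.
Qed.

Lemma iter_Tmap a b c d n i x t : in_level a b c d n i x -> (i + t < Hc a b c d n)%nat ->
  Nat.iter t (Tmap a b c d) x = x - Lv a b c d n i + Lv a b c d n (i + t).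
Proof.
  intros Hx. induction t as [|t IH]; intro Ht.
  - simpl. rewrite Nat.add_0_r. ring.
  - rewrite Nat.iter_succ. rewrite IH by lia.
    apply Tmap_spec. apply Tgraph_unfold. exists n, (i + t)%nat. split; [lia|]. split.
    + apply level_shift; auto. lia.
    + replace (i + S t)%nat with (S (i + t)) by lia. ring.
Qed.

Lemma iter_Tinv a b c d n j y t : in_level a b c d n j y -> (t <= j)%nat ->
  Nat.iter t (Tinv a b c d) y = y - Lv a b c d n j + Lv a b c d n (j - t).
Proof.
  intros Hy. assert (Hj : (j < Hc a b c d n)%nat) by (apply in_level_iff in Hy; tauto).
  induction t as [|t IH]; intro Ht.
  - simpl. rewrite Nat.sub_0_r. ring.
  - rewrite Nat.iter_succ. rewrite IH by lia.
    apply Tinv_spec. apply Tgraph_unfold. exists n, (j - S t)%nat. split; [lia|]. split.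
    + apply level_shift; auto. lia.
    + replace (S (j - S t)) with (j - t)%nat by lia. ring.
Qed.

Lemma num_index a b c d N m : (m < Hc a b c d N)%nat ->
  exists i, (i < Hc a b c d N)%nat /\ Lv a b c d N i = INR m * width N.
Proof.
  intro Hm. destruct (In_nth _ _ 0%nat (lev_all a b c d N m Hm)) as [i [Hi Ei]].
  rewrite lev_len in Hi. exists i. split; auto. rewrite Lv_eq by auto. rewrite Ei. reflexivity.
Qed.

Lemma sub_num_level a b c d N m s x : (m < Hc a b c d N)%nat -> (s < 4)%nat ->
  INR (4*m+s) * width (S N) <= x < INR (4*m+s) * width (S N) + width (S N) ->
  exists i, (i < Hc a b c d N)%nat /\ Lv a b c d N i = INR m * width N /\
    in_level a b c d (S N) (off a b c d N s + i) x.
Proof.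
  intros Hm Hs Hx. destruct (num_index a b c d N m Hm) as [i [Hi Ei]].
  exists i. split; auto. split; auto. apply in_level_iff. split; [apply off_bound; auto|].
  rewrite Lv_off, Ei by auto. rewrite (width_S N) in *.
  rewrite plus_INR, mult_INR in Hx. simpl INR in Hx. lra.
Qed.

Lemma dyn_p a b c d N m x : (m < Hc a b c d N)%nat ->
  INR (4*m) * width (S N) <= x < INR (4*m) * width (S N) + width (S N) ->
  Nat.iter (pp a b c d N) (Tmap a b c d) x = x + width (S N).
Proof.
  intros Hm Hx. rewrite <- (Nat.add_0_r (4*m)) in Hx.
  destruct (sub_num_level a b c d N m 0 x Hm ltac:(lia) Hx) as [i [Hi [Ei Hl]]].
  rewrite (iter_Tmap _ _ _ _ _ _ _ _ Hl).
  - replace (off a b c d N 0 + i + pp a b c d N)%nat with (off a b c d N 1 + i)%nat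
      by (unfold off, pp; lia).
    rewrite !Lv_off by (auto; lia). simpl INR. ring.
  - replace (off a b c d N 0 + i + pp a b c d N)%nat with (off a b c d N 1 + i)%nat
      by (unfold off, pp; lia).
    apply off_bound; auto.
Qed.

Lemma dyn_q a b c d N m x : (m < Hc a b c d N)%nat ->
  INR (4*m+2) * width (S N) <= x < INR (4*m+2) * width (S N) + width (S N) ->
  Nat.iter (qq a b c d N) (Tmap a b c d) x = x + width (S N).
Proof.
  intros Hm Hx.
  destruct (sub_num_level a b c d N m 2 x Hm ltac:(lia) Hx) as [i [Hi [Ei Hl]]].
  rewrite (iter_Tmap _ _ _ _ _ _ _ _ Hl).
  - replace (off a b c d N 2 + i + qq a b c d N)%nat with (off a b c d N 3 + i)%nat
      by (unfold off, qq; lia).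
    rewrite !Lv_off by (auto; lia). simpl INR. ring.
  - replace (off a b c d N 2 + i + qq a b c d N)%nat with (off a b c d N 3 + i)%nat
      by (unfold off, qq; lia).
    apply off_bound; auto.
Qed.

Lemma dyn_pinv a b c d N m x : (m < Hc a b c d N)%nat ->
  INR (4*m+1) * width (S N) <= x < INR (4*m+1) * width (S N) + width (S N) ->
  Nat.iter (pp a b c d N) (Tinv a b c d) x = x - width (S N).
Proof.
  intros Hm Hx.
  destruct (sub_num_level a b c d N m 1 x Hm ltac:(lia) Hx) as [i [Hi [Ei Hl]]].
  rewrite (iter_Tinv _ _ _ _ _ _ _ _ Hl) by (unfold off, pp; lia).
  replace (off a b c d N 1 + i - pp a b c d N)%nat with (off a b c d N 0 + i)%nat
    by (unfold off, pp; lia).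
  rewrite !Lv_off by (auto; lia). simpl INR. ring.
Qed.


Definition sumL {A : Type} (f : A -> R) (l : list A) : R :=
  fold_right (fun x acc => Rplus (f x) acc) 0%R l.

Lemma psum_ext f g N : (forall k, f k = g k) -> psum f N = psum g N.
Proof. intro H. induction N; simpl; [reflexivity|]. rewrite IHN, H. reflexivity. Qed.

Lemma psum_le f g N : (forall k, f k <= g k) -> psum f N <= psum g N.
Proof. intro H. induction N; simpl; [lra|]. specialize (H N). lra. Qed.

Lemma psum_mono f N M : (forall k, 0 <= f k) -> (N <= M)%nat -> psum f N <= psum f M.
Proof.
  intros H HNM. induction HNM; [lra|]. simpl. specialize (H m). lra.
Qed.

Lemma psum_nonneg f N : (forall k, 0 <= f k) -> 0 <= psum f N.
Proof. intro H. induction N; simpl; [lra|]. specialize (H N). lra. Qed.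

Lemma psum_sumL_swap (F : nat -> nat -> R) G N :
  sumL (fun j => psum (F j) N) G = psum (fun k => sumL (fun j => F j k) G) N.
Proof.
  induction G as [|j G IH]; simpl.
  - induction N; simpl; [reflexivity|]. rewrite <- IHN. ring.
  - rewrite IH. clear IH. induction N; simpl; [ring|]. rewrite <- IHN. ring.
Qed.

Lemma sumL_le {A} (f g : A -> R) G : (forall j, In j G -> f j <= g j) -> sumL f G <= sumL g G.
Proof.
  induction G as [|j G IH]; intro H; simpl; [lra|].
  assert (f j <= g j) by (apply H; left; reflexivity).
  assert (sumL f G <= sumL g G) by (apply IH; intros; apply H; right; assumption). lra.
Qed.

Lemma not_outer_lt0 E : ~ outer_lt E 0.
Proof. intros [ra [rb [rc [rd [e [He [_ [_ Hp]]]]]]]]. specialize (Hp O). simpl in Hp. lra. Qed.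

Lemma outer_mono (E F : set2) e : (forall z, E z -> F z) -> outer_lt F e -> outer_lt E e.
Proof.
  intros H [ra [rb [rc [rd [e' [He [Hr [Hc Hp]]]]]]]].
  exists ra, rb, rc, rd, e'. split; [auto|]. split; [auto|]. split; [|auto].
  intros z Hz. apply Hc. apply H. exact Hz.
Qed.

Lemma outer_translate (E : set2) e u v : outer_lt E e ->
  outer_lt (fun z => E (fst z + u, snd z + v)) e.
Proof.
  intros [ra [rb [rc [rd [e' [He [Hr [Hc Hp]]]]]]]].
  exists (fun k => ra k - u), (fun k => rb k - u), (fun k => rc k - v), (fun k => rd k - v), e'.
  split; [auto|]. split; [intro k; specialize (Hr k); lra|]. split.
  - intros z Hz. destruct (Hc _ Hz) as [k Hk]. simpl in Hk. exists k. lra.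
  - intro N. rewrite (psum_ext _ (fun k => (rb k - ra k) * (rd k - rc k))); auto.
    intro k. ring.
Qed.

Lemma psum_interleave (f g : nat -> R) N :
  psum (fun k => if Nat.even k then f (Nat.div2 k) else g (Nat.div2 k)) (2 * N) = psum f N + psum g N.
Proof.
  induction N as [|N IH]; [simpl; ring|].
  replace (2 * S N)%nat with (S (S (2 * N))) by lia. cbn [psum].
  rewrite IH.
  replace (Nat.even (2 * N)) with true by (symmetry; apply Nat.even_spec; exists N; lia).
  replace (Nat.even (S (2 * N))) with false
    by (rewrite Nat.even_succ, <- Nat.negb_even, (proj2 (Nat.even_spec (2*N))) by (exists N; lia); reflexivity).
  rewrite Nat.div2_double.
  replace (Nat.div2 (S (2 * N))) with N by (rewrite Nat.div2_succ_double; reflexivity).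
  ring.
Qed.

Lemma outer_union2 (E F : set2) e1 e2 : outer_lt E e1 -> outer_lt F e2 ->
  outer_lt (fun z => E z \/ F z) (e1 + e2).
Proof.
  intros [ra [rb [rc [rd [e' [He [Hr [Hc Hp]]]]]]]]
         [sa [sb [sc [sd [f' [Hf [Hs [Hd Hq]]]]]]]].
  pose (sel (A B : nat -> R) k := if Nat.even k then A (Nat.div2 k) else B (Nat.div2 k)).
  exists (sel ra sa), (sel rb sb), (sel rc sc), (sel rd sd), (e' + f').
  split; [lra|]. split.
  { intro k. unfold sel. destruct (Nat.even k); auto. }
  split.
  - intros z [Hz|Hz].
    + destruct (Hc _ Hz) as [k Hk]. exists (2 * k)%nat. unfold sel.
      replace (Nat.even (2 * k)) with true by (symmetry; apply Nat.even_spec; exists k; lia).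
      rewrite Nat.div2_double. exact Hk.
    + destruct (Hd _ Hz) as [k Hk]. exists (S (2 * k))%nat. unfold sel.
      replace (Nat.even (S (2 * k))) with false.
      * rewrite Nat.div2_succ_double. exact Hk.
      * rewrite Nat.even_succ. rewrite <- Nat.negb_even.
        rewrite (proj2 (Nat.even_spec (2*k))) by (exists k; lia). reflexivity.
  - intro N.
    assert (Hnn : forall k, 0 <= (sel rb sb k - sel ra sa k) * (sel rd sd k - sel rc sc k)).
    { intro k. unfold sel. destruct (Nat.even k);
        [destruct (Hr (Nat.div2 k))|destruct (Hs (Nat.div2 k))]; apply Rmult_le_pos; lra. }
    apply Rle_trans with (psum (fun k => (sel rb sb k - sel ra sa k) * (sel rd sd k - sel rc sc k)) (2 * N)).
    { apply psum_mono; auto. lia. }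
    rewrite (psum_ext _ (fun k => if Nat.even k then (fun k => (rb k - ra k) * (rd k - rc k)) (Nat.div2 k)
                                   else (fun k => (sb k - sa k) * (sd k - sc k)) (Nat.div2 k))).
    + rewrite (psum_interleave (fun k => (rb k - ra k) * (rd k - rc k)) (fun k => (sb k - sa k) * (sd k - sc k)) N). specialize (Hp N). specialize (Hq N). lra.
    + intro k. unfold sel. destruct (Nat.even k); reflexivity.
Qed.

Definition clo (r1 r2 q1 : R) := Rmin (Rmax r1 q1) r2.
Definition chi (r1 r2 q1 q2 : R) := Rmax (clo r1 r2 q1) (Rmin r2 q2).

Ltac mm_tac := unfold chi, clo, Rmin, Rmax in *; repeat destruct Rle_dec; lra.

Lemma clamp1 r1 r2 q1 q2 : r1 <= r2 ->
  r1 <= clo r1 r2 q1 /\ clo r1 r2 q1 <= chi r1 r2 q1 q2 /\ chi r1 r2 q1 q2 <= r2.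
Proof. intros. split; [|split]; mm_tac. Qed.

Lemma clamp2 r1 r2 q1 q2 x : clo r1 r2 q1 <= x -> x < chi r1 r2 q1 q2 -> q1 <= x < q2.
Proof. intros. split; mm_tac. Qed.

Lemma clamp3 r1 r2 q1 q2 x : r1 <= x < r2 -> q1 <= x < q2 -> clo r1 r2 q1 <= x < chi r1 r2 q1 q2.
Proof. intros. split; mm_tac. Qed.



Module MC.
From mathcomp Require Import all_boot all_order all_algebra.
From mathcomp Require Import all_classical all_reals all_analysis.
From mathcomp Require Import Rstruct Rstruct_topology.
Import Order.TTheory GRing.Theory Num.Theory.
Local Open Scope classical_set_scope.

Section F4.
Local Open Scope ereal_scope.

Lemma psumE f N : (\sum_(0 <= k < N) (f k)%:E) = (psum f N)%:E.
Proof. elim: N => [|N IH]; first by rewrite big_geq. by rewrite big_nat_recr //= IH -EFinD. Qed.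

Lemma leb_itv (x y : R) : (x <= y)%R -> (@lebesgue_measure R) `[x, y[ = (y - x)%:E.
Proof. move=> xy; rewrite lebesgue_measure_itv /= lte_fin.
case: ltgtP xy => //.
by move=> -> _; rewrite subrr.
Qed.

Lemma rectP (x y u v : R) : (x <= y)%R -> (u <= v)%R ->
  (((@lebesgue_measure R) \x (@lebesgue_measure R)) (`[x, y[ `*` `[u, v[)) = ((y - x) * (v - u))%:E.
Proof. move=> h1 h2. rewrite product_measure1E //. transitivity ((y-x)%:E * (v-u)%:E); last by rewrite EFinM. by congr (_ * _); apply: leb_itv. Qed.
End F4.

Local Open Scope ereal_scope.
Lemma F4 (a b c d e : R) (ra rb rc rd : nat -> R) :
  Rle a b -> Rle c d ->
  (forall k, Rle (ra k) (rb k) /\ Rle (rc k) (rd k)) ->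
  (forall x y, Rle a x -> Rlt x b -> Rle c y -> Rlt y d -> exists k,
     Rle (ra k) x /\ Rlt x (rb k) /\ Rle (rc k) y /\ Rlt y (rd k)) ->
  (forall N, Rle (psum (fun k => Rmult (Rminus (rb k) (ra k)) (Rminus (rd k) (rc k))) N) e) ->
  Rle (Rmult (Rminus b a) (Rminus d c)) e.
Proof.
move=> hab hcd hr hcov hps.
set P := ((@lebesgue_measure R) \x (@lebesgue_measure R))%E.
have := @measure_sigma_subadditive _ _ _ P (`[a,b[ `*` `[c,d[)
  (fun k => `[ra k, rb k[ `*` `[rc k, rd k[).
move=> /(_ _ _ _) H.
have {}H : (P (`[a,b[ `*` `[c,d[) <= \sum_(0 <= n <oo) P (`[ra n, rb n[ `*` `[rc n, rd n[))%E.
  apply: H.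
  - by move=> n; apply: measurableX; apply: measurable_itv.
  - by apply: measurableX; apply: measurable_itv.
  - move=> [x y] [/= hx hy].
    move: hx hy; rewrite !in_itv /= => /andP [/RleP h1 /RltP h2] /andP [/RleP h3 /RltP h4].
    have [k [k1 [k2 [k3 k4]]]] := hcov x y h1 h2 h3 h4.
    exists k => //; split; rewrite /= in_itv /=; apply/andP; split;
      (apply/RleP || apply/RltP); assumption.
have E1 : P (`[a,b[ `*` `[c,d[) = ((b - a) * (d - c))%:E.
  by apply: rectP; apply/RleP.
rewrite E1 in H.
have E2 : (\sum_(0 <= n <oo) P (`[ra n, rb n[ `*` `[rc n, rd n[)) =
   \sum_(0 <= n <oo) (((rb n - ra n) * (rd n - rc n))%:E).
  apply: eq_eseriesr => n _; apply: rectP; apply/RleP; apply hr.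
rewrite E2 in H.
have H3 : (\sum_(0 <= n <oo) (((rb n - ra n) * (rd n - rc n))%:E) <= e%:E)%E.
  apply: lime_le.
    apply: is_cvg_nneseries => n _ _; rewrite lee_fin; apply/RleP.
    have [h1 h2] := hr n; apply: Rmult_le_pos; apply/RleP; rewrite subr_ge0; apply/RleP; assumption.
  apply: nearW => N; rewrite /= psumE lee_fin; apply/RleP; exact: hps.
have := le_trans H H3; rewrite lee_fin => /RleP; exact.
Qed.

Lemma MC_disj (ra rb rc rd : R) (xa xb ya yb : nat -> R) (G : list nat) :
  NoDup G ->
  (forall j, In j G -> Rle ra (xa j) /\ Rle (xa j) (xb j) /\ Rle (xb j) rb /\
                      Rle rc (ya j) /\ Rle (ya j) (yb j) /\ Rle (yb j) rd) ->
  (forall j j', In j G -> In j' G -> j <> j' -> forall x y,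
     Rle (xa j) x -> Rlt x (xb j) -> Rle (ya j) y -> Rlt y (yb j) ->
     Rle (xa j') x -> Rlt x (xb j') -> Rle (ya j') y -> Rlt y (yb j') -> False) ->
  Rle ra rb -> Rle rc rd ->
  Rle (sumL (fun j => Rmult (Rminus (xb j) (xa j)) (Rminus (yb j) (ya j))) G)
      (Rmult (Rminus rb ra) (Rminus rd rc)).
Proof.
move=> HG Hin Hdis hab hcd.
set P := ((@lebesgue_measure R) \x (@lebesgue_measure R))%E.
pose rect j : set (measurableTypeR R * measurableTypeR R)%type := `[xa j, xb j[ `*` `[ya j, yb j[.
pose U (l : list nat) : set (measurableTypeR R * measurableTypeR R)%type := [set z | exists j, In j l /\ rect j z].
have mrect : forall j, measurable (rect j).
  by move=> j; apply: measurableX; apply: measurable_itv.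
have key : forall l, NoDup l -> (forall j, In j l -> In j G) ->
    measurable (U l) /\ P (U l) = (sumL (fun j => Rmult (Rminus (xb j) (xa j)) (Rminus (yb j) (ya j))) l)%:E.
  elim => [|j l IH] Hl Hsub.
  - have -> : U [::] = set0 by apply/seteqP; split => z //= [? [[]]].
    by split; [exact: measurable0 | rewrite /= /P measure0].
  - have [Hj Hl'] : ~ In j l /\ NoDup l by inversion Hl.
    have [IH1 IH2] := IH Hl' (fun j' h => Hsub j' (or_intror h)).
    have -> : U (j :: l) = rect j `|` U l.
      apply/seteqP; split => z /=.
      + by move=> [j' [[<-|h] hz]]; [left | right; exists j'].
      + by move=> [hz|[j' [h hz]]]; [exists j; split; [left|] | exists j'; split; [right|]].
    split; first exact: measurableU.
    rewrite /P in IH2 *; rewrite measureU //; last first.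
      apply/seteqP; split => z //= [hz [j' [h hz']]].
      move: hz hz'; case: z => x y /= [hx hy] [hx' hy'].
      move: hx hy hx' hy'; rewrite /= !in_itv /= =>
        /andP [/RleP h1 /RltP h2] /andP [/RleP h3 /RltP h4]
        /andP [/RleP h5 /RltP h6] /andP [/RleP h7 /RltP h8].
      have Hne : j <> j' by move=> E; apply: Hj; rewrite E.
      exact: (Hdis j j' (Hsub j (or_introl erefl)) (Hsub j' (or_intror h)) Hne x y h1 h2 h3 h4 h5 h6 h7 h8).
    have [_ [hj1 [_ [_ [hj2 _]]]]] := Hin j (Hsub j (or_introl erefl)).
    transitivity ((Rmult (Rminus (xb j) (xa j)) (Rminus (yb j) (ya j)))%:E +
      (sumL (fun j => Rmult (Rminus (xb j) (xa j)) (Rminus (yb j) (ya j))) l)%:E);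
      last by rewrite -EFinD.
    congr (_ + _); [apply: rectP; apply/RleP; assumption | exact: IH2].
have [m1 m2] := key G HG (fun j h => h).
have H1 : (P (U G) <= P (`[ra, rb[ `*` `[rc, rd[))%E.
  apply: le_measure; rewrite ?inE //.
  - by apply: measurableX; apply: measurable_itv.
  - move=> [x y] [j [h [/= hx hy]]].
    have [k1 [k2 [k3 [k4 [k5 k6]]]]] := Hin j h.
    move: hx hy; rewrite /= !in_itv /= => /andP [/RleP h1 /RltP h2] /andP [/RleP h3 /RltP h4].
    split; apply/andP; split; first [apply/RleP | apply/RltP]; lra.
have H2 : ((sumL (fun j => Rmult (Rminus (xb j) (xa j)) (Rminus (yb j) (ya j))) G)%:E
   <= ((rb - ra) * (rd - rc))%:E)%E.
  have hr := rectP ra rb rc rd (introT RleP hab) (introT RleP hcd).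
  rewrite -m2 -hr; exact H1.
move: H2; rewrite lee_fin => /RleP; exact.
Qed.

End MC.
Lemma KL (E : set2) (ra rb rc rd : nat -> R) (e' : R)
  (hr : forall k, ra k <= rb k /\ rc k <= rd k)
  (hcov : forall z, E z -> exists k, ra k <= fst z < rb k /\ rc k <= snd z < rd k)
  (hps : forall N, psum (fun k => (rb k - ra k) * (rd k - rc k)) N <= e')
  (G : list nat) (hG : NoDup G)
  (qa qb qc qd : nat -> R) (hq : forall j, qa j <= qb j /\ qc j <= qd j)
  (hdis : forall j j', In j G -> In j' G -> j <> j' -> forall x y,
      qa j <= x < qb j -> qc j <= y < qd j -> qa j' <= x < qb j' -> qc j' <= y < qd j' -> False)
  (P : nat -> set2)
  (hP : forall j z, In j G -> P j z -> E z /\ qa j <= fst z < qb j /\ qc j <= snd z < qd j)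
  (v : nat -> R) (hv : forall j, In j G -> ~ outer_lt (P j) (v j)) :
  sumL v G <= e'.
Proof.
  pose (xl k j := clo (ra k) (rb k) (qa j)).
  pose (xr k j := chi (ra k) (rb k) (qa j) (qb j)).
  pose (yl k j := clo (rc k) (rd k) (qc j)).
  pose (yr k j := chi (rc k) (rd k) (qc j) (qd j)).
  pose (ar j k := (xr k j - xl k j) * (yr k j - yl k j)).
  assert (ar_nn : forall j k, 0 <= ar j k).
  { intros j k. unfold ar, xr, xl, yr, yl. destruct (hr k).
    destruct (clamp1 (ra k) (rb k) (qa j) (qb j)) as [? [? ?]]; auto.
    destruct (clamp1 (rc k) (rd k) (qc j) (qd j)) as [? [? ?]]; auto.
    apply Rmult_le_pos; lra. }
  assert (C1 : forall j, In j G -> forall g, 0 < g -> exists N, psum (ar j) N > v j - g).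
  { intros j Hj g Hg. apply NNPP. intro Hn.
    apply (hv j Hj).
    exists (fun k => xl k j), (fun k => xr k j), (fun k => yl k j), (fun k => yr k j), (v j - g).
    split; [lra|]. split.
    - intro k. unfold xl, xr, yl, yr. destruct (hr k).
      destruct (clamp1 (ra k) (rb k) (qa j) (qb j)) as [? [? ?]]; auto.
      destruct (clamp1 (rc k) (rd k) (qc j) (qd j)) as [? [? ?]]; auto.
    - split.
      + intros z Hz. destruct (hP j z Hj Hz) as [HE [Hx Hy]].
        destruct (hcov z HE) as [k [Hkx Hky]]. exists k.
        unfold xl, xr, yl, yr.
        pose proof (clamp3 _ _ _ _ _ Hkx Hx). pose proof (clamp3 _ _ _ _ _ Hky Hy). lra.
      + intro N. apply Rnot_gt_le. intro HN. apply Hn. exists N. exact HN. }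
  assert (C2 : forall G', (forall j, In j G' -> In j G) -> forall g, 0 < g ->
     exists N, sumL (fun j => psum (ar j) N) G' > sumL v G' - g).
  { induction G' as [|j G' IH]; intros Hsub g Hg.
    - exists O. simpl. lra.
    - destruct (C1 j (Hsub j (or_introl eq_refl)) (g/2)) as [N1 HN1]; [lra|].
      destruct (IH (fun j' h => Hsub j' (or_intror h)) (g/2)) as [N2 HN2]; [lra|].
      exists (Nat.max N1 N2). simpl.
      assert (psum (ar j) N1 <= psum (ar j) (Nat.max N1 N2)) by (apply psum_mono; auto; lia).
      assert (sumL (fun j => psum (ar j) N2) G' <= sumL (fun j => psum (ar j) (Nat.max N1 N2)) G').
      { apply sumL_le. intros j' _. apply psum_mono; auto; lia. }
      lra. }
  assert (C3 : forall N, sumL (fun j => psum (ar j) N) G <= e').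
  { intro N. rewrite psum_sumL_swap. eapply Rle_trans; [|apply (hps N)].
    apply psum_le. intro k. destruct (hr k) as [hr1 hr2].
    apply (MC.MC_disj (ra k) (rb k) (rc k) (rd k) (xl k) (xr k) (yl k) (yr k) G hG).
    - intros j Hj. unfold xl, xr, yl, yr.
      destruct (clamp1 (ra k) (rb k) (qa j) (qb j)) as [? [? ?]]; auto.
      destruct (clamp1 (rc k) (rd k) (qc j) (qd j)) as [? [? ?]]; auto.
      repeat split; auto.
    - intros j j' Hj Hj' Hne x y H1 H2 H3 H4 H5 H6 H7 H8.
      apply (hdis j j' Hj Hj' Hne x y).
      + exact (clamp2 _ _ _ _ _ H1 H2).
      + exact (clamp2 _ _ _ _ _ H3 H4).
      + exact (clamp2 _ _ _ _ _ H5 H6).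
      + exact (clamp2 _ _ _ _ _ H7 H8).
    - exact hr1.
    - exact hr2. }
  apply Rnot_gt_le. intro Hgt.
  destruct (C2 G (fun j h => h) (sumL v G - e')) as [N HN]; [lra|].
  specialize (C3 N). lra.
Qed.


Lemma final_gen (A Q : set2) (S : R * R -> R * R) n x0 y0 w u v : 0 < w ->
  outer_lt (fun z => Q z /\ ~ A z) (w * w / 4) ->
  (forall z, x0 <= fst z < x0 + w -> y0 <= snd z < y0 + w ->
     Q z /\ Q (fst z + u, snd z + v) /\ Nat.iter n S z = (fst z + u, snd z + v)) ->
  ~ null2 (fun z => A (Nat.iter n S z) /\ A z).
Proof.
  intros Hw HQ Hz Hnull.
  assert (HB : outer_lt (fun z => A (Nat.iter n S z) /\ A z) (w * w / 4))
    by (apply Hnull; nra).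
  pose proof (outer_translate _ _ u v HQ) as HT.
  pose proof (outer_union2 _ _ _ _ HB (outer_union2 _ _ _ _ HQ HT)) as HU.
  destruct HU as [ra [rb [rc [rd [e' [He [Hr [Hc Hp]]]]]]]].
  assert (H4 : Rle (Rmult (Rminus (x0 + w) x0) (Rminus (y0 + w) y0)) e').
  { apply (MC.F4 x0 (x0 + w) y0 (y0 + w) e' ra rb rc rd); [lra | lra | exact Hr | | exact Hp].
    intros x y H1 H2 H3 H4.
    assert (Hin : A (Nat.iter n S (x, y)) /\ A (x, y) \/
      Q (x, y) /\ ~ A (x, y) \/ Q (fst (x, y) + u, snd (x, y) + v) /\ ~ A (fst (x, y) + u, snd (x, y) + v)).
    { destruct (Hz (x, y)) as [HQ1 [HQ2 Hit]]; simpl; try lra.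
      destruct (classic (A (x, y))) as [Ha|Ha].
      - destruct (classic (A (x + u, y + v))) as [Ha'|Ha'].
        + left. rewrite Hit. simpl. split; assumption.
        + right. right. simpl. split; assumption.
      - right. left. split; assumption. }
    destruct (Hc (x, y) Hin) as [k Hk]. exists k. simpl in Hk. tauto. }
  replace (Rmult (Rminus (x0 + w) x0) (Rminus (y0 + w) y0)) with (w * w) in H4 by (unfold Rminus; ring).
  nra.
Qed.

Definition sq (t m1 m2 : nat) (z : R * R) : Prop :=
  INR m1 * width t <= fst z < INR m1 * width t + width t /\
  INR m2 * width t <= snd z < INR m2 * width t + width t.

Lemma subcell m j w x : (j < 4)%nat ->
  INR (4 * m + j) * w <= x < INR (4 * m + j) * w + w ->
  INR m * (4 * w) <= x < INR m * (4 * w) + 4 * w.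
Proof.
  intros Hj Hx. rewrite plus_INR, mult_INR in Hx. simpl INR in Hx.
  assert (0 <= INR j) by apply pos_INR.
  assert (INR j <= 3) by (replace 3 with (INR 3) by (simpl; ring); apply le_INR; lia).
  destruct Hx as [H1 H2]. split.
  - assert (0 <= INR j * w \/ w < 0) by (destruct (Rle_lt_dec 0 w); [left; nra| right; lra]).
    nra.
  - nra.
Qed.

Lemma sumL_const (c : R) (l : list nat) : sumL (fun _ => c) l = INR (length l) * c.
Proof. induction l as [|x l IH]; simpl sumL; [simpl; ring|]. rewrite IH. simpl length. rewrite S_INR. ring. Qed.

Lemma D2 (A : set2) dl t m1 m2 : 0 < dl ->
  outer_lt (fun z => sq t m1 m2 z /\ ~ A z) (dl * (width t * width t)) ->
  exists j1 j2, (j1 < 4)%nat /\ (j2 < 4)%nat /\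
    outer_lt (fun z => sq (S t) (4 * m1 + j1) (4 * m2 + j2) z /\ ~ A z)
       (dl * (width (S t) * width (S t))).
Proof.
  intros Hdl Hout. apply NNPP. intro Hn.
  destruct Hout as [ra [rb [rc [rd [e' [He [Hr [Hc Hp]]]]]]]].
  set (w := width (S t)). assert (Hw : 0 < w) by apply width_pos.
  assert (Ew : width t = 4 * w) by apply width_S.
  pose (j1 j := Nat.div j 4). pose (j2 j := Nat.modulo j 4).
  assert (Hj1 : forall j, (j < 16)%nat -> (j1 j < 4)%nat).
  { intros j Hj. unfold j1. apply Nat.Div0.div_lt_upper_bound. lia. }
  assert (Hj2 : forall j, (j2 j < 4)%nat) by (intro j; apply Nat.mod_upper_bound; lia).
  assert (Hjj : forall j, j = (4 * j1 j + j2 j)%nat) by (intro j; apply Nat.div_mod_eq).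
  pose (qa j := INR (4 * m1 + j1 j) * w). pose (qb j := qa j + w).
  pose (qc j := INR (4 * m2 + j2 j) * w). pose (qd j := qc j + w).
  assert (KLr := KL (fun z => sq t m1 m2 z /\ ~ A z) ra rb rc rd e' Hr Hc Hp (seq 0 16) (seq_NoDup 16 0)
     qa qb qc qd ltac:(intro j; unfold qb, qd; lra)).
  assert (Hsum : sumL (fun _ => dl * (w * w)) (seq 0 16) <= e').
  { apply KLr with (P := fun j z => sq (S t) (4 * m1 + j1 j)%nat (4 * m2 + j2 j)%nat z /\ ~ A z).
    - intros j j' Hj Hj' Hne x y Hx Hy Hx' Hy'.
      apply in_seq in Hj. apply in_seq in Hj'.
      unfold qa, qb, qc, qd in *.
      pose proof (nat_cell_unique _ _ _ _ Hw Hx Hx') as E1.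
      pose proof (nat_cell_unique _ _ _ _ Hw Hy Hy') as E2.
      apply Hne. rewrite (Hjj j), (Hjj j'). lia.
    - intros j z Hj [Hs Ha]. apply in_seq in Hj. destruct Hs as [Hs1 Hs2].
      split; [split; [|exact Ha]|]; fold w in Hs1, Hs2.
      + split; rewrite Ew.
        * apply (subcell m1 (j1 j) w (fst z) (Hj1 j ltac:(lia))); exact Hs1.
        * apply (subcell m2 (j2 j) w (snd z) (Hj2 j)); exact Hs2.
      + unfold qa, qb, qc, qd. split; assumption.
    - intros j Hj Ho. apply in_seq in Hj. apply Hn. exists (j1 j), (j2 j).
      split; [apply Hj1; lia|]. split; [apply Hj2|]. exact Ho. }
  rewrite sumL_const, length_seq in Hsum. rewrite Ew in He. simpl INR in Hsum.
  nra.
Qed.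

Lemma D2_iter a b c d (A : set2) dl dd : forall t m1 m2, 0 < dl ->
  (m1 < Hc a b c d t)%nat -> (m2 < Hc a b c d t)%nat ->
  outer_lt (fun z => sq t m1 m2 z /\ ~ A z) (dl * (width t * width t)) ->
  exists n1 n2, (n1 < Hc a b c d (t + dd))%nat /\ (n2 < Hc a b c d (t + dd))%nat /\
    outer_lt (fun z => sq (t + dd) n1 n2 z /\ ~ A z) (dl * (width (t + dd) * width (t + dd))).
Proof.
  induction dd as [|dd IH]; intros t m1 m2 Hdl H1 H2 Ho.
  - exists m1, m2. rewrite Nat.add_0_r. auto.
  - destruct (D2 A dl t m1 m2 Hdl Ho) as [j1 [j2 [Hj1 [Hj2 Ho']]]].
    replace (t + S dd)%nat with (S t + dd)%nat by lia.
    apply (IH (S t) (4 * m1 + j1)%nat (4 * m2 + j2)%nat Hdl); auto; cbn [Hc]; lia.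
Qed.

Lemma width_pow t d : width t = INR (4 ^ d) * width (t + d).
Proof.
  induction d as [|d IH].
  - rewrite Nat.add_0_r. simpl. ring.
  - rewrite IH. replace (t + S d)%nat with (S (t + d)) by lia.
    rewrite (width_S (t + d)). rewrite Nat.pow_succ_r', mult_INR. simpl INR. ring.
Qed.

Lemma cell_nest1 (m m' K : nat) w' x x' : 0 < w' ->
  INR m * (INR K * w') <= x < INR m * (INR K * w') + INR K * w' ->
  INR m' * w' <= x < INR m' * w' + w' ->
  INR m' * w' <= x' < INR m' * w' + w' ->
  INR m * (INR K * w') <= x' < INR m * (INR K * w') + INR K * w'.
Proof.
  intros Hw H1 H2 H3.
  assert (A1 : INR m' < INR (m * K + K)).
  { rewrite plus_INR, mult_INR. apply Rmult_lt_reg_r with w'; [exact Hw|]. nra. }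
  assert (A2 : INR (m * K) < INR (m' + 1)).
  { rewrite plus_INR, mult_INR. simpl INR. apply Rmult_lt_reg_r with w'; [exact Hw|]. nra. }
  apply INR_lt in A1. apply INR_lt in A2.
  assert (B1 : INR (m * K) <= INR m') by (apply le_INR; lia).
  assert (B2 : INR (m' + 1) <= INR (m * K + K)) by (apply le_INR; lia).
  rewrite mult_INR in B1. rewrite !plus_INR, mult_INR in B2. simpl INR in B2.
  assert (C1 : INR m * INR K * w' <= INR m' * w') by (apply Rmult_le_compat_r; lra).
  assert (C2 : (INR m' + 1) * w' <= (INR m * INR K + INR K) * w') by (apply Rmult_le_compat_r; lra).
  split; nra.
Qed.

Lemma sq_nest t t' m1 m2 m1' m2' z z' : (t <= t')%nat ->
  sq t m1 m2 z -> sq t' m1' m2' z -> sq t' m1' m2' z' -> sq t m1 m2 z'.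
Proof.
  unfold sq. intros Hle [Hx Hy] [Hx' Hy'] [Hx'' Hy''].
  pose proof (width_pow t (t' - t)) as Ew. replace (t + (t' - t))%nat with t' in Ew by lia.
  rewrite Ew in *. pose proof (width_pos t') as Hw.
  split; eapply cell_nest1; eauto.
Qed.

Lemma min_nat (P : nat -> Prop) n : P n -> exists t, P t /\ forall t', (t' < t)%nat -> ~ P t'.
Proof.
  revert n. induction n as [n IH] using (well_founded_induction lt_wf).
  intro Hn. destruct (classic (exists t', (t' < n)%nat /\ P t')) as [[t' [Ht' Hp]]|Hno].
  - apply (IH t' Ht' Hp).
  - exists n. split; auto. intros t' Ht' Hp. apply Hno. exists t'. auto.
Qed.

Lemma sumL_app {A} (f : A -> R) l1 l2 : sumL f (l1 ++ l2) = sumL f l1 + sumL f l2.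
Proof. induction l1; simpl; [ring|]. rewrite IHl1. ring. Qed.

Lemma psum_seq f N : psum f N = sumL f (seq 0 N).
Proof.
  induction N as [|N IH]; [reflexivity|].
  rewrite seq_S, sumL_app, <- IH. simpl. ring.
Qed.

Lemma sumL_scale {A} (f : A -> R) c l : sumL (fun j => c * f j) l = c * sumL f l.
Proof. induction l; simpl; [ring|]. rewrite IHl. ring. Qed.

Definition Fp a b c d (U : set2) t m1 m2 : Prop :=
  (m1 < Hc a b c d t)%nat /\ (m2 < Hc a b c d t)%nat /\ (forall z, sq t m1 m2 z -> U z) /\
  (forall t' n1 n2, (t' < t)%nat -> (n1 < Hc a b c d t')%nat -> (n2 < Hc a b c d t')%nat ->
     (exists z, sq t' n1 n2 z /\ sq t m1 m2 z) -> ~ (forall z, sq t' n1 n2 z -> U z)).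

Lemma Fp_disj a b c d U t m1 m2 t' n1 n2 z :
  Fp a b c d U t m1 m2 -> Fp a b c d U t' n1 n2 -> sq t m1 m2 z -> sq t' n1 n2 z ->
  t = t' /\ m1 = n1 /\ m2 = n2.
Proof.
  intros [H1 [H2 [H3 H4]]] [G1 [G2 [G3 G4]]] Hz Hz'.
  destruct (lt_eq_lt_dec t t') as [[Hlt|Heq]|Hgt].
  - exfalso. apply (G4 t m1 m2 Hlt H1 H2); [exists z; auto | exact H3].
  - subst t'. destruct Hz as [Hx Hy]. destruct Hz' as [Hx' Hy'].
    pose proof (width_pos t).
    split; [reflexivity|]. split; eapply nat_cell_unique; eauto.
  - exfalso. apply (H4 t' n1 n2 Hgt G1 G2); [exists z; auto | exact G3].
Qed.

Lemma Fp_cover a b c d (U : set2) z t0 m1 m2 :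
  (m1 < Hc a b c d t0)%nat -> (m2 < Hc a b c d t0)%nat -> sq t0 m1 m2 z ->
  (forall z', sq t0 m1 m2 z' -> U z') ->
  exists t n1 n2, Fp a b c d U t n1 n2 /\ sq t n1 n2 z.
Proof.
  intros H1 H2 Hz HU.
  destruct (min_nat (fun t => exists n1 n2, (n1 < Hc a b c d t)%nat /\ (n2 < Hc a b c d t)%nat /\
     sq t n1 n2 z /\ (forall z', sq t n1 n2 z' -> U z')) t0) as [t [[n1 [n2 [G1 [G2 [Gz GU]]]]] Hmin]].
  { exists m1, m2. auto. }
  exists t, n1, n2. split; [|exact Gz].
  split; [auto|]. split; [auto|]. split; [auto|].
  intros t' k1 k2 Hlt K1 K2 [z'' [Hz1 Hz2]] HU'.
  apply (Hmin t' Hlt). exists k1, k2. split; [auto|]. split; [auto|]. split; [|auto].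
  apply (sq_nest t' t k1 k2 n1 n2 z'' z); auto. lia.
Qed.

Lemma X_cell a b c d x : Xspace a b c d x -> exists n0, forall t, (n0 <= t)%nat ->
  exists M, (M < Hc a b c d t)%nat /\ INR M * width t <= x < INR M * width t + width t.
Proof.
  intros [n [i Hx]]. exists n. intros t Ht.
  destruct (descent_multi a b c d (t - n) n i x Hx) as [j Hj].
  replace (n + (t - n))%nat with t in Hj by lia.
  apply in_level_iff in Hj. destruct Hj as [Hj Hxj].
  exists (nth j (lev a b c d t) 0%nat). split.
  - apply (proj2 (lev_props a b c d t)). apply nth_In. rewrite lev_len. exact Hj.
  - rewrite Lv_eq in Hxj by exact Hj. exact Hxj.
Qed.

Lemma point_good a b c d (U : set2) z : Xspace a b c d (fst z) -> Xspace a b c d (snd z) ->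
  open2 U -> U z ->
  exists t0 m1 m2, (m1 < Hc a b c d t0)%nat /\ (m2 < Hc a b c d t0)%nat /\ sq t0 m1 m2 z /\
    (forall z', sq t0 m1 m2 z' -> U z').
Proof.
  intros HX1 HX2 HU Hz.
  destruct (HU z Hz) as [r [Hr Hball]].
  destruct (X_cell a b c d _ HX1) as [n1 Hn1].
  destruct (X_cell a b c d _ HX2) as [n2 Hn2].
  destruct (pow_lt_1_zero (/ 4) ltac:(rewrite Rabs_pos_eq; lra) r Hr) as [N HN].
  set (t := Nat.max N (Nat.max n1 n2)).
  destruct (Hn1 t ltac:(lia)) as [M1 [HM1 Hx]].
  destruct (Hn2 t ltac:(lia)) as [M2 [HM2 Hy]].
  exists t, M1, M2. split; [auto|]. split; [auto|]. split; [split; auto|].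
  assert (Hw : width t < r).
  { specialize (HN t ltac:(lia)). unfold width. rewrite Rabs_pos_eq in HN; [exact HN|].
    apply pow_le. lra. }
  intros z' [Hx' Hy']. apply Hball; apply Rabs_def1; lra.
Qed.

Lemma D1 a b c d (A : set2) dl : 0 < dl ->
  (forall z, A z -> Xspace a b c d (fst z) /\ Xspace a b c d (snd z)) ->
  measurable2 A -> ~ null2 A ->
  exists t m1 m2, (m1 < Hc a b c d t)%nat /\ (m2 < Hc a b c d t)%nat /\
    outer_lt (fun z => sq t m1 m2 z /\ ~ A z) (dl * (width t * width t)).
Proof.
  intros Hdl HX Hm Hn.
  assert (Heps : exists eps0, 0 < eps0 /\ ~ outer_lt A eps0).
  { apply NNPP. intro H. apply Hn. intros eps Heps. apply NNPP. intro H'.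
    apply H. exists eps. auto. }
  destruct Heps as [eps0 [Heps0 Hno0]].
  apply NNPP. intro Hno.
  destruct (Hm (dl * eps0 / 2)) as [U [HUo [HAU Hout]]]; [nra|].
  destruct Hout as [ra [rb [rc [rd [e' [He [Hr [Hc Hp]]]]]]]].
  pose (tt k := fst (of_nat k)).
  pose (mm1 k := fst (of_nat (snd (of_nat k)))).
  pose (mm2 k := snd (of_nat (snd (of_nat k)))).
  pose (Fk k := Fp a b c d U (tt k) (mm1 k) (mm2 k)).
  pose (sel k (u : R) := if excluded_middle_informative (Fk k) then u else 0).
  pose (qa k := sel k (INR (mm1 k) * width (tt k))).
  pose (qb k := sel k (INR (mm1 k) * width (tt k) + width (tt k))).
  pose (qc k := sel k (INR (mm2 k) * width (tt k))).
  pose (qd k := sel k (INR (mm2 k) * width (tt k) + width (tt k))).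
  assert (Hq : forall k, qa k <= qb k /\ qc k <= qd k).
  { intro k. unfold qa, qb, qc, qd, sel. pose proof (width_pos (tt k)).
    destruct (excluded_middle_informative (Fk k)); lra. }
  assert (Hrect : forall k x y, qa k <= x < qb k -> qc k <= y < qd k ->
             Fk k /\ sq (tt k) (mm1 k) (mm2 k) (x, y)).
  { intros k x y Hx Hy. unfold qa, qb, qc, qd, sel in Hx, Hy.
    destruct (excluded_middle_informative (Fk k)) as [HF|HF]; [|lra].
    split; [exact HF|]. split; simpl; lra. }
  assert (Hdec : forall k k', tt k = tt k' -> mm1 k = mm1 k' -> mm2 k = mm2 k' -> k = k').
  { intros k k' E1 E2 E3. unfold tt, mm1, mm2 in *.
    rewrite <- (cancel_to_of k), <- (cancel_to_of k'). f_equal.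
    destruct (of_nat k) as [u1 u2] eqn:Ek. destruct (of_nat k') as [u1' u2'] eqn:Ek'.
    simpl in *. subst u1'. f_equal.
    rewrite <- (cancel_to_of u2), <- (cancel_to_of u2'). f_equal.
    destruct (of_nat u2), (of_nat u2'). simpl in *. subst. reflexivity. }
  assert (HKL : forall N, sumL (fun k => dl * ((qb k - qa k) * (qd k - qc k))) (seq 0 N) <= e').
  { intro N.
    apply (KL (fun z => U z /\ ~ A z) ra rb rc rd e' Hr Hc Hp (seq 0 N) (seq_NoDup N 0)
      qa qb qc qd Hq) with (P := fun k z => (qa k <= fst z < qb k /\ qc k <= snd z < qd k) /\ ~ A z).
    - intros j j' Hj Hj' Hne x y Hx Hy Hx' Hy'.
      destruct (Hrect j x y Hx Hy) as [F1 S1].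
      destruct (Hrect j' x y Hx' Hy') as [F2 S2].
      destruct (Fp_disj _ _ _ _ _ _ _ _ _ _ _ _ F1 F2 S1 S2) as [E1 [E2 E3]].
      apply Hne. apply Hdec; auto.
    - intros j z Hj [[Hx Hy] Ha].
      destruct (Hrect j (fst z) (snd z) Hx Hy) as [[_ [_ [HU _]]] Hs].
      split; [split; [apply HU; destruct z; exact Hs | exact Ha]|].
      split; assumption.
    - intros j Hj Ho.
      destruct (excluded_middle_informative (Fk j)) as [HF|HF].
      + apply Hno. exists (tt j), (mm1 j), (mm2 j).
        pose proof HF as [HF1 [HF2 _]]. split; [exact HF1|]. split; [exact HF2|].
        assert (Ev : dl * ((qb j - qa j) * (qd j - qc j)) = dl * (width (tt j) * width (tt j))).
        { unfold qa, qb, qc, qd, sel. destruct (excluded_middle_informative (Fk j)); [ring|contradiction]. }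
        rewrite Ev in Ho. revert Ho. apply outer_mono.
        intros z [[Hx Hy] Ha]. split; [|exact Ha].
        unfold qa, qb, qc, qd, sel. destruct (excluded_middle_informative (Fk j)); [|contradiction].
        exact (conj Hx Hy).
      + assert (Ev : dl * ((qb j - qa j) * (qd j - qc j)) = 0).
        { unfold qa, qb, qc, qd, sel. destruct (excluded_middle_informative (Fk j)); [contradiction|ring]. }
        rewrite Ev in Ho. exact (not_outer_lt0 _ Ho). }
  apply Hno0.
  exists qa, qb, qc, qd, (e' / dl). split.
  { apply Rmult_lt_reg_r with dl; [exact Hdl|]. unfold Rdiv. rewrite Rmult_assoc, Rinv_l by lra. nra. }
  split; [exact Hq|]. split.
  - intros z Hz. destruct (HX z Hz) as [HX1 HX2].
    destruct (point_good a b c d U z HX1 HX2 HUo (HAU z Hz)) as [t0 [m1 [m2 [H1 [H2 [Hs HU]]]]]].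
    destruct (Fp_cover a b c d U z t0 m1 m2 H1 H2 Hs HU) as [t [n1 [n2 [HF Hs']]]].
    exists (to_nat (t, to_nat (n1, n2))).
    assert (Et : tt (to_nat (t, to_nat (n1, n2))) = t) by (unfold tt; cbv beta; rewrite cancel_of_to; reflexivity).
    assert (E1 : mm1 (to_nat (t, to_nat (n1, n2))) = n1)
      by (unfold mm1; cbv beta; rewrite cancel_of_to; cbn [snd]; rewrite cancel_of_to; reflexivity).
    assert (E2 : mm2 (to_nat (t, to_nat (n1, n2))) = n2)
      by (unfold mm2; cbv beta; rewrite cancel_of_to; cbn [snd]; rewrite cancel_of_to; reflexivity).
    unfold qa, qb, qc, qd, sel.
    destruct (excluded_middle_informative (Fk (to_nat (t, to_nat (n1, n2))))) as [HF'|HF'].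
    + rewrite Et, E1, E2. destruct Hs' as [Hx Hy]. split; assumption.
    + exfalso. apply HF'. unfold Fk. rewrite Et, E1, E2. exact HF.
  - intro N. rewrite psum_seq.
    specialize (HKL N). rewrite sumL_scale in HKL.
    apply Rmult_le_reg_r with dl; [exact Hdl|]. unfold Rdiv. rewrite Rmult_assoc, Rinv_l by lra.
    rewrite Rmult_1_r, Rmult_comm. exact HKL.
Qed.

Lemma iter_prodmap (f g : R -> R) k z :
  Nat.iter k (prodmap f g) z = (Nat.iter k f (fst z), Nat.iter k g (snd z)).
Proof.
  induction k as [|k IH]; [destruct z; reflexivity|].
  rewrite !Nat.iter_succ, IH. reflexivity.
Qed.

Lemma iter_iter (f : R -> R) k p x : Nat.iter k (Nat.iter p f) x = Nat.iter (k * p) f x.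
Proof.
  induction k as [|k IH]; [reflexivity|].
  rewrite Nat.iter_succ, IH. replace (S k * p)%nat with (p + k * p)%nat by lia.
  rewrite Nat.iter_add. reflexivity.
Qed.

Lemma cell_sub m j w x : (j < 4)%nat ->
  INR (4 * m + j) * w <= x < INR (4 * m + j) * w + w ->
  INR m * (4 * w) <= x < INR m * (4 * w) + 4 * w.
Proof. apply subcell. Qed.

Lemma main_common a b c d p q (hp : (0 < p)%nat) (hq : (0 < q)%nat)
  (hinf : forall N : nat, exists n : nat, (N <= n)%nat /\
            exists k : nat, qq a b c d n = (k * q)%nat /\ pp a b c d n = (k * p)%nat)
  (A : set2) : (forall z, A z -> Xspace a b c d (fst z) /\ Xspace a b c d (snd z)) ->
  measurable2 A -> ~ null2 A ->
  exists N k n1 n2, (1 <= k)%nat /\ (n1 < Hc a b c d N)%nat /\ (n2 < Hc a b c d N)%nat /\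
    qq a b c d N = (k * q)%nat /\ pp a b c d N = (k * p)%nat /\
    outer_lt (fun z => sq N n1 n2 z /\ ~ A z) (width (S N) * width (S N) / 4).
Proof.
  intros HX Hm Hn.
  destruct (D1 a b c d A (1/64) ltac:(lra) HX Hm Hn) as [t [m1 [m2 [H1 [H2 Ho]]]]].
  destruct (hinf t) as [N [HtN [k [Hq Hp]]]].
  destruct (D2_iter a b c d A (1/64) (N - t) t m1 m2 ltac:(lra) H1 H2 Ho) as [n1 [n2 [G1 [G2 Go]]]].
  replace (t + (N - t))%nat with N in * by lia.
  exists N, k, n1, n2.
  assert (Hk : (1 <= k)%nat).
  { destruct k; [|lia]. unfold pp in Hp. pose proof (Nat.lt_0_succ (Hc a b c d N)). 
    assert (0 < Hc a b c d N)%nat.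
    { destruct N; cbn [Hc]; lia. }
    lia. }
  repeat split; auto.
  replace (width (S N) * width (S N) / 4) with (1/64 * (width N * width N))
    by (rewrite (width_S N); field). exact Go.
Qed.

Theorem mainTheorem2 (p q : nat) (a b c d : nat -> nat)
  (hp : (0 < p)%nat) (hq : (0 < q)%nat)
  (ha : forall n, (0 < a n)%nat) (hb : forall n, (0 < b n)%nat)
  (hc : forall n, (0 < c n)%nat) (hd : forall n, (0 < d n)%nat)
  (hW : in_W a b c d)
  (hinf : forall N : nat, exists n : nat, (N <= n)%nat /\
            exists k : nat, qq a b c d n = (k * q)%nat /\ pp a b c d n = (k * p)%nat) :
  conservative2 (Xspace a b c d)
    (prodmap (Nat.iter p (Tmap a b c d)) (Nat.iter q (Tmap a b c d))) /\
  conservative2 (Xspace a b c d)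
    (prodmap (Nat.iter p (Tinv a b c d)) (Nat.iter q (Tmap a b c d))).
Proof.
  split; intros A HX Hm Hn;
    destruct (main_common a b c d p q hp hq hinf A HX Hm Hn)
      as [N [k [n1 [n2 [Hk [H1 [H2 [Hq [Hp Ho]]]]]]]]];
    exists k; split; auto;
    pose proof (width_pos (S N)) as Hw; pose proof (width_S N) as Ew.
  - apply (final_gen A (sq N n1 n2) _ k (INR (4 * n1) * width (S N)) (INR (4 * n2 + 2) * width (S N))
      (width (S N)) (width (S N)) (width (S N)) Hw Ho).
    intros [x y] Hx Hy. simpl fst in *. simpl snd in *.
    split; [|split].
    + split; rewrite Ew.
      * apply (cell_sub n1 0 (width (S N)) x); [lia|]. rewrite Nat.add_0_r. exact Hx.
      * apply (cell_sub n2 2 (width (S N)) y); [lia|]. exact Hy.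
    + split; rewrite Ew.
      * apply (cell_sub n1 1 (width (S N)) (x + width (S N))); [lia|].
        rewrite plus_INR, mult_INR in *. simpl INR in *. lra.
      * apply (cell_sub n2 3 (width (S N)) (y + width (S N))); [lia|].
        rewrite plus_INR, mult_INR in *. simpl INR in *. lra.
    + rewrite iter_prodmap. simpl fst. simpl snd.
      rewrite !iter_iter, <- Hp, <- Hq.
      rewrite (dyn_p a b c d N n1 x H1 Hx), (dyn_q a b c d N n2 y H2 Hy). reflexivity.
  - apply (final_gen A (sq N n1 n2) _ k (INR (4 * n1 + 1) * width (S N)) (INR (4 * n2 + 2) * width (S N))
      (width (S N)) (- width (S N)) (width (S N)) Hw Ho).
    intros [x y] Hx Hy. simpl fst in *. simpl snd in *.
    split; [|split].
    + split; rewrite Ew.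
      * apply (cell_sub n1 1 (width (S N)) x); [lia|]. exact Hx.
      * apply (cell_sub n2 2 (width (S N)) y); [lia|]. exact Hy.
    + split; rewrite Ew.
      * apply (cell_sub n1 0 (width (S N)) (x + - width (S N))); [lia|].
        rewrite !plus_INR, !mult_INR in *. simpl INR in *. lra.
      * apply (cell_sub n2 3 (width (S N)) (y + width (S N))); [lia|].
        rewrite plus_INR, mult_INR in *. simpl INR in *. lra.
    + rewrite iter_prodmap. simpl fst. simpl snd.
      rewrite !iter_iter, <- Hp, <- Hq.
      rewrite (dyn_pinv a b c d N n1 x H1 Hx), (dyn_q a b c d N n2 y H2 Hy).
      f_equal.
Qed.
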